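(* Let $A \in \mathbb{R}^{n\times n}$ and let $Q, D \in \mathbb{R}^{n\times n}$ be symmetric. Assume that the pair $(A,D)$ is stabilizable and the pair $(Q,A)$ is detectable, and let $P$ be the unique stabilizing solution of the algebraic Riccati equation $A^T X + XA + Q - XDX = 0$. Let $$H = \begin{bmatrix} A & -D \\ -Q & -A^T\end{bmatrix}\in\mathbb{R}^{2n\times 2n},\qquad J=\begin{bmatrix}\mathbf{0}_n & I_n\\ -I_n & \mathbf{0}_n\end{bmatrix},$$ and let $(\lambda_i, v_i)$ be a right eigenpair of $H$ with $\lambda_i<0$ real and $v_i\in\mathbb{R}^{2n}$ a unit vector ($Hv_i=\lambda_i v_i$, $\|v_i\|=1$). Define $p_i = (J + I_{2n}) v_i$ and $q_i = J v_i$. Then for any $\Delta\lambda_i \in \mathbb{R}$ there exist $\tilde A \in \mathbb{R}^{n\times n}$ and symmetric $\tilde Q, \tilde D \in \mathbb{R}^{n\times n}$ such that $$H + \Delta\lambda_i\left(v_i p_i^T - q_i q_i^T\right) = \begin{bmatrix} \tilde A & -\tilde D \\ -\tilde Q & -\tilde A^T\end{bmatrix}.$$ Moreover, if $\Delta\lambda_i < -\lambda_i$, then $P$ is the unique stabilizing solution of $\tilde A^T X + X\tilde A + \tilde Q - X\tilde D X = 0$.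
   Context: A solution $X$ of the algebraic Riccati equation $A^TX+XA+Q-XDX=0$ is called stabilizing if $A - DX$ is Hurwitz (all eigenvalues have negative real part); a stabilizing solution, if it exists, is unique (and symmetric). Under the stabilizability/detectability assumption such a solution exists. A right eigenpair $(\lambda,v)$ of a matrix $M$ means $Mv=\lambda v$ with $v\neq 0$. *)

(* Defs.v *)
From HB Require Import structures.
From mathcomp Require Import all_boot all_order all_algebra.
From mathcomp Require Import reals complex.
Set Implicit Arguments. Unset Strict Implicit. Unset Printing Implicit Defensive.
Import Order.TTheory GRing.Theory Num.Theory.
Local Open Scope ring_scope.

Definition cmx (R : realType) m k (M : 'M[R]_(m, k)) : 'M[R[i]]_(m, k) :=
  map_mx (fun x => (x%:C)%C) M.

Definition hurwitz (R : realType) n (M : 'M[R]_n) : Prop :=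
  forall (lam : R[i]) (v : 'cV[R[i]]_n),
    v != 0 -> cmx M *m v = lam *: v -> Re lam < 0.

Definition stabilizable (R : realType) n m (A : 'M[R]_n) (B : 'M[R]_(n, m)) : Prop :=
  exists K : 'M[R]_(m, n), hurwitz (A + B *m K).

Definition detectable (R : realType) n p (C : 'M[R]_(p, n)) (A : 'M[R]_n) : Prop :=
  stabilizable A^T C^T.

Definition sym_mx (R : realType) n (M : 'M[R]_n) : Prop := M^T = M.

Definition are_solution (R : realType) n (A Q D X : 'M[R]_n) : Prop :=
  A^T *m X + X *m A + Q - X *m D *m X = 0.

Definition stabilizing_solution (R : realType) n (A Q D X : 'M[R]_n) : Prop :=
  are_solution A Q D X /\ hurwitz (A - D *m X).

Definition unique_stabilizing_solution (R : realType) n (A Q D X : 'M[R]_n) : Prop :=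
  stabilizing_solution A Q D X /\
  forall Y, stabilizing_solution A Q D Y -> Y = X.

Definition hamiltonian (R : realType) n (A Q D : 'M[R]_n) : 'M[R]_(n + n) :=
  block_mx A (- D) (- Q) (- A^T).

Definition Jmx (R : realType) n : 'M[R]_(n + n) :=
  block_mx 0 1%:M (- 1%:M) 0.

Definition enorm (R : realType) k (v : 'cV[R]_k) : R :=
  Num.sqrt (\sum_(j < k) v j 0 ^+ 2).

(* Main.v *)
Require Import Defs.
From HB Require Import structures.
From mathcomp Require Import all_boot all_order all_algebra.
From mathcomp Require Import reals complex.
From mathcomp Require Import lra ring.
Import Order.TTheory GRing.Theory Num.Theory.
Local Open Scope ring_scope.
Section Aux.
Variable R : realType.
Local Notation C := (R[i]).

Lemma ReRC (x : R) : 'Re ((x%:C)%C : C) = (x%:C)%C.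
Proof. by rewrite -complexRe. Qed.
Lemma ltC0 (x : R) : (((x%:C)%C : C) < 0) = (x < 0).
Proof. by rewrite ltcE /= eqxx. Qed.

Definition hurC {n} (K : 'M[C]_n) := forall (lam : C) (v : 'cV[C]_n),
    v != 0 -> K *m v = lam *: v -> 'Re lam < 0.

Lemma sylvC n m (K1 : 'M[C]_n) (K2 : 'M[C]_m) (Z : 'M[C]_(n, m)) :
  hurC K1 -> hurC K2 -> K1^T *m Z + Z *m K2 = 0 -> Z = 0.
Proof.
move: K1 Z; case: n => [|n] K1 Z; first by move=> *; apply/matrixP => -[].
move: K2 Z; case: m => [|m] K2 Z; first by move=> *; apply/matrixP => ? -[].
move=> h1 h2 hs.
have hK : K1^T *m Z = Z *m (- K2).
  by apply/eqP; rewrite mulmxN -addr_eq0 hs.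
have comm : forall p, horner_mx K1^T p *m Z = Z *m horner_mx (- K2) p.
  elim/poly_ind => [|p c IH]; first by rewrite !rmorph0 mul0mx mulmx0.
  rewrite !rmorphD !rmorphM /= !horner_mx_X !horner_mx_C -!mulmxE.
  rewrite mulmxDl mulmxDr scalar_mxC -mulmxA hK mulmxA IH -!mulmxA //.
have CH := Cayley_Hamilton K1^T.
have hZ : Z *m horner_mx (- K2) (char_poly K1^T) = 0 by rewrite -comm CH mul0mx.
have [rs Hp] := closed_field_poly_normal (char_poly K1^T).
rewrite (monicP (char_poly_monic _)) scale1r in Hp.
suff hu : horner_mx (- K2) (char_poly K1^T) \in unitmx.
  by rewrite -(mulmxK hu Z) hZ mul0mx.
rewrite Hp rmorph_prod /=.
have hroot : forall z, z \in rs -> 'Re z < 0.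
  move=> z zin.
  have : root (char_poly K1^T) z by rewrite Hp root_prod_XsubC.
  rewrite -eigenvalue_root_char => /eigenvalueP [v hv v0].
  apply: (h1 z v^T); first by rewrite trmx_eq0.
  by rewrite -[K1]trmxK -trmx_mul hv linearZ.
rewrite big_seq; apply: (big_ind (fun M => M \in unitmx)).
- by rewrite unitmx1.
- by move=> M N hM hN; rewrite -mulmxE unitmx_mul hM.
move=> z zin; rewrite rmorphB /= horner_mx_X horner_mx_C.
rewrite unitmxE unitfE -det_tr; apply/negP => /det0P [w w0 hw].
have : 'Re (- z) < 0.
  apply: (h2 (- z) w^T); first by rewrite trmx_eq0.
  have := congr1 trmx hw; rewrite trmx_mul trmxK trmx0.
  rewrite mulmxBl mul_scalar_mx => /eqP; rewrite subr_eq0 => /eqP h.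
  by rewrite -[K2]opprK mulNmx h scaleNr.
by rewrite raddfN /= oppr_lt0 => h; have := lt_trans h (hroot z zin); rewrite ltxx.
Qed.
End Aux.

Set Implicit Arguments. Unset Strict Implicit. Unset Printing Implicit Defensive.

Ltac gen_prods := repeat (match goal with |- context [?a *m ?b] => let t := fresh "t" in set t := (a *m b); clearbody t end).
Ltac mx_finish :=
  repeat (let h := fresh "h" in move=> /matrixP h);
  let i := fresh "i" in let j := fresh "j" in apply/matrixP => i j;
  repeat match goal with h : _ =2 _ |- _ => move: (h i j); clear h end;
  rewrite !mxE; move=> *; lra.

Section Real.
Variable R : realType.

Lemma cmx0_inj n m (Z : 'M[R]_(n, m)) : cmx Z = 0 -> Z = 0.
Proof.
move=> h; apply/matrixP => i j; have := congr1 (fun M : 'M_(n, m) => M i j) h.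
by rewrite !mxE => /(congr1 (@complex.Re R)).
Qed.

Lemma sylv n m (N1 : 'M[R]_n) (N2 : 'M[R]_m) (Z : 'M[R]_(n, m)) :
  hurwitz N1 -> hurwitz N2 -> N1^T *m Z + Z *m N2 = 0 -> Z = 0.
Proof.
move=> h1 h2 hs; apply: cmx0_inj; apply: (@sylvC R _ _ (cmx N1) (cmx N2) _ h1 h2).
by rewrite /cmx map_trmx -!map_mxM -map_mxD hs map_mx0.
Qed.

Lemma hur_scalar (lam : R) : lam < 0 -> hurwitz (lam%:M : 'M_1).
Proof.
move=> hl mu v v0; rewrite /cmx map_scalar_mx mul_scalar_mx => /eqP.
rewrite -subr_eq0 -scalerBl scaler_eq0 (negPf v0) orbF subr_eq0 => /eqP <-.
by rewrite ReRC ltC0.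
Qed.

Lemma stab_sym n (A Q D X : 'M[R]_n) : sym_mx Q -> sym_mx D ->
  stabilizing_solution A Q D X -> X^T = X.
Proof.
move=> sQ sD [hare hur].
suff : X - X^T = 0 by move/eqP; rewrite subr_eq0 => /eqP.
apply: (@sylv _ _ _ _ _ hur hur).
have hare' := congr1 trmx hare.
rewrite !linearD /= !linearN /= !trmx_mul !trmxK sQ sD trmx0 in hare'.
move: hare hare'; rewrite /are_solution.
have -> : (A - D *m X)^T = A^T - X^T *m D by rewrite linearB /= trmx_mul sD.
rewrite !mulmxBl !mulmxBr ?mulmxDl ?mulmxDr !mulmxA.
gen_prods. mx_finish.
Qed.


Lemma stab_eig n (A Q D X : 'M[R]_n) (x y : 'cV[R]_n) (lam : R) :
  sym_mx Q -> sym_mx D -> stabilizing_solution A Q D X -> lam < 0 ->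
  hamiltonian A Q D *m col_mx x y = lam *: col_mx x y ->
  y = X *m x /\ (A - D *m X) *m x = lam *: x.
Proof.
move=> sQ sD hst hl; have sX := stab_sym sQ sD hst; case: hst => hare hur.
rewrite /hamiltonian mul_block_col scale_col_mx => /eq_col_mx [e1 e2].
have hz : y - X *m x = 0.
  apply: (@sylv _ _ _ _ _ hur (hur_scalar hl)).
  have -> : (A - D *m X)^T = A^T - X *m D by rewrite linearB /= trmx_mul sD sX.
  rewrite mul_mx_scalar.
  have e1' := congr1 (mulmx X) e1.
  have are' := congr1 (mulmx^~ x) hare.
  move: e1' e2 are'; rewrite /are_solution.
  rewrite ?(mulmxDr, mulmxDl, mulmxBl, mulmxBr, mulmxN, mulNmx, mul0mx, mulmx0) -?scalemxAr !mulmxA.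
  gen_prods. mx_finish.
have hy : y = X *m x by apply/eqP; rewrite -subr_eq0 hz.
split => //.
by rewrite mulmxBl -mulmxA -hy -e1 mulNmx.
Qed.

Lemma brauer n (Ac : 'M[R]_n) (x : 'cV[R]_n) (u : 'rV[R]_n) (lam dlam : R) :
  hurwitz Ac -> Ac *m x = lam *: x -> u *m x = 1%:M -> lam < 0 ->
  lam + dlam < 0 -> hurwitz (Ac + dlam *: (x *m u)).
Proof.
move=> hA hx hu hl hl2 mu w w0.
rewrite /cmx map_mxD map_mxZ map_mxM.
set Ac' := map_mx _ Ac; set X' := map_mx _ x; set U := map_mx _ u.
have hX : Ac' *m X' = (lam%:C)%C *: X' by rewrite /Ac' /X' -map_mxM hx map_mxZ.
have hUX : U *m X' = 1%:M by rewrite /U /X' -map_mxM hu map_mx1.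
set c := (U *m w) 0 0.
have hUw : U *m w = c%:M by rewrite {1}[U *m w]mx11_scalar.
move=> hw.
have hw' : Ac' *m w = mu *: w - ((dlam%:C)%C * c) *: X'.
  by rewrite -hw mulmxDl -scalemxAl -mulmxA hUw mul_mx_scalar scalerA addrK.
case: (eqVneq mu (lam%:C)%C) => [-> | hne]; first by rewrite ReRC ltC0.
set alpha := (dlam%:C)%C * c / (mu - (lam%:C)%C).
set w' := w - alpha *: X'.
have hw'eig : Ac' *m w' = mu *: w'.
  rewrite /w' mulmxBr -scalemxAr hX hw' scalerBr !scalerA -addrA; congr (_ + _).
  rewrite -opprD -scalerDl; congr (- (_ *: _)).
  rewrite /alpha; field; by rewrite subr_eq0.
case: (eqVneq w' 0) => [hw0 | hw'0]; last exact: (hA mu w' hw'0 hw'eig).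
have hwa : w = alpha *: X' by apply/eqP; rewrite -subr_eq0 -/w' hw0.
have hc : c = alpha by rewrite /c hwa -scalemxAr hUX !mxE /= mulr1.
have hX0 : X' != 0 by apply: contraNneq w0 => h0; rewrite hwa h0 scaler0.
have ha0 : alpha != 0 by apply: contraNneq w0 => h0; rewrite hwa h0 scale0r.
have key : (alpha * (lam%:C)%C + (dlam%:C)%C * alpha - mu * alpha) *: X' = 0.
  move: hw'; rewrite hwa -scalemxAr hX hc !scalerA => h.
  by rewrite !scalerDl scaleNr h subrK subrr.
move/eqP: key; rewrite scaler_eq0 (negPf hX0) orbF => /eqP key.
have hmu : mu = ((lam + dlam)%:C)%C.
  rewrite rmorphD /=; apply: (mulIf ha0).
  transitivity (mu * alpha + 0); first by rewrite addr0.
  rewrite -key; ring.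
by rewrite hmu ReRC ltC0.
Qed.

Lemma ham_LR n (A Q D X : 'M[R]_n) :
  row_mx (- X) 1%:M *m hamiltonian A Q D *m col_mx 1%:M X =
  - (A^T *m X + X *m A + Q - X *m D *m X).
Proof.
rewrite /hamiltonian mul_row_block mul_row_col.
rewrite ?(mulmxDr, mulmxDl, mulmxBl, mulmxBr, mulmxN, mulNmx, mul0mx, mulmx0, mul1mx, mulmx1) ?mulmxA.
gen_prods. mx_finish.
Qed.

Lemma ham_top n (A Q D X : 'M[R]_n) :
  row_mx 1%:M 0 *m hamiltonian A Q D *m col_mx 1%:M X = A - D *m X.
Proof.
rewrite /hamiltonian mul_row_block mul_row_col.
by rewrite !mul1mx !mul0mx !addr0 mulmx1 mulNmx.
Qed.

Lemma stab_pert n (A Q D X At Qt Dt : 'M[R]_n) (x : 'cV[R]_n) (v : 'cV[R]_(n + n))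
    (lam dlam : R) :
  X^T = X -> stabilizing_solution A Q D X -> (A - D *m X) *m x = lam *: x ->
  v = col_mx x (X *m x) -> lam < 0 -> lam + dlam < 0 ->
  ((Jmx R n + 1%:M) *m v)^T *m v = 1%:M ->
  hamiltonian At Qt Dt = hamiltonian A Q D + dlam *: (v *m ((Jmx R n + 1%:M) *m v)^T
                                   - (Jmx R n *m v) *m (Jmx R n *m v)^T) ->
  stabilizing_solution At Qt Dt X.
Proof.
move=> sX [hare hur] hx hv hl hl2 hpv hH.
move: hpv hH; set p := (Jmx R n + 1%:M) *m v; set q := Jmx R n *m v => hpv hH.
have Lv : row_mx (- X) 1%:M *m v = 0 by rewrite hv mul_row_col mul1mx mulNmx addNr.
have hq : q = col_mx (X *m x) (- x).
  by rewrite /q /Jmx hv mul_block_col !mul0mx !mul1mx add0r addr0 mulNmx mul1mx.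
have qR : q^T *m col_mx 1%:M X = 0.
  by rewrite hq tr_col_mx mul_row_col mulmx1 trmx_mul sX linearN /= mulNmx addrN.
have Tv : row_mx 1%:M 0 *m v = x by rewrite hv mul_row_col mul1mx mul0mx addr0.
have Rx : col_mx 1%:M X *m x = v by rewrite hv mul_col_mx mul1mx.
split.
- rewrite /are_solution; apply/eqP; rewrite -oppr_eq0 -ham_LR hH.
  rewrite mulmxDr mulmxDl ham_LR -/(are_solution _ _ _ _) hare oppr0 add0r.
  rewrite -scalemxAr -scalemxAl mulmxBr mulmxBl !mulmxA Lv !mul0mx sub0r.
  by rewrite -!mulmxA qR !mulmx0 oppr0 scaler0.
- rewrite -(ham_top At Qt) hH mulmxDr mulmxDl ham_top -scalemxAr -scalemxAl.
  rewrite mulmxBr mulmxBl !mulmxA Tv -[_ *m q^T *m _]mulmxA qR mulmx0 subr0.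
  rewrite -mulmxA; apply: (@brauer _ _ _ _ lam dlam hur hx) => //.
  by rewrite -mulmxA Rx.
Qed.

Lemma trD m k (A B : 'M[R]_(m, k)) : (A + B)^T = A^T + B^T.
Proof. exact: linearD. Qed.
Lemma trB m k (A B : 'M[R]_(m, k)) : (A - B)^T = A^T - B^T.
Proof. exact: linearB. Qed.
Lemma trN m k (A : 'M[R]_(m, k)) : (- A)^T = - A^T.
Proof. exact: linearN. Qed.
Lemma trZ m k (a : R) (A : 'M[R]_(m, k)) : (a *: A)^T = a *: A^T.
Proof. exact: linearZ. Qed.

Lemma tr11 (M : 'M[R]_1) : M^T = M.
Proof. by apply/matrixP => i j; rewrite !ord1 mxE. Qed.

Lemma vTv k (v : 'cV[R]_k) : enorm v = 1 -> v^T *m v = 1%:M.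
Proof.
rewrite /enorm => h.
have hs : \sum_(j < k) v j 0 ^+ 2 = 1.
  have := congr1 (fun t => t ^+ 2) h; rewrite /= sqr_sqrtr ?expr1n //.
  by apply: sumr_ge0 => j _; exact: sqr_ge0.
apply/matrixP => i j; rewrite !ord1 !mxE /= -hs.
by apply: eq_bigr => l _; rewrite !mxE expr2.
Qed.
End Real.

Unset Implicit Arguments.

Theorem theorem1 (R : realType) (n : nat) (A Q D P : 'M[R]_n)
  (symQ : sym_mx Q) (symD : sym_mx D)
  (hstab : stabilizable A D) (hdet : detectable Q A)
  (hP : unique_stabilizing_solution A Q D P)
  (lam : R) (v : 'cV[R]_(n + n))
  (hlam : lam < 0) (heig : hamiltonian A Q D *m v = lam *: v)
  (hunit : enorm v = 1) (dlam : R) :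
  let p := (Jmx R n + 1%:M) *m v in
  let q := Jmx R n *m v in
  exists (At Qt Dt : 'M[R]_n),
    [/\ sym_mx Qt, sym_mx Dt,
        hamiltonian A Q D + dlam *: (v *m p^T - q *m q^T) = hamiltonian At Qt Dt
      & dlam < - lam -> unique_stabilizing_solution At Qt Dt P].
Proof.
move=> p q.
case: hP => hPst hPu.
have sP := stab_sym symQ symD hPst.
set x := usubmx v; set y := dsubmx v.
have hv : v = col_mx x y by rewrite vsubmxK.
have heig' : hamiltonian A Q D *m col_mx x y = lam *: col_mx x y by rewrite -hv.
have [hy hAx] := stab_eig symQ symD hPst hlam heig'.
have hq : q = col_mx y (- x).
  by rewrite /q /Jmx hv mul_block_col !mul0mx !mul1mx add0r addr0 mulNmx mul1mx.
have hp : p = col_mx (y + x) (- x + y).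
  by rewrite /p mulmxDl -/q hq mul1mx hv add_col_mx.
have hvv := vTv hunit.
have hqv : q^T *m v = 0.
  rewrite hq hv tr_col_mx mul_row_col linearN /= mulNmx.
  by rewrite -[y^T *m x]tr11 trmx_mul trmxK subrr.
have hpv : p^T *m v = 1%:M.
  by rewrite /p mulmxDl mul1mx -/q linearD /= mulmxDl hqv add0r hvv.
pose E := x *m x^T + x *m y^T - y *m y^T.
pose G := x *m y^T + y *m x^T - x *m x^T.
pose F := y *m x^T + x *m y^T + y *m y^T.
have sQt : sym_mx (Q - dlam *: F).
  rewrite /sym_mx /F !(trD, trB, trZ, trN) !trmx_mul !trmxK symQ.
  gen_prods. mx_finish.
have sDt : sym_mx (D - dlam *: G).
  rewrite /sym_mx /G !(trD, trB, trZ, trN) !trmx_mul !trmxK symD.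
  gen_prods. mx_finish.
have hH : hamiltonian A Q D + dlam *: (v *m p^T - q *m q^T) =
          hamiltonian (A + dlam *: E) (Q - dlam *: F) (D - dlam *: G).
  rewrite hp hq {1}hv !tr_col_mx !mul_col_row opp_block_mx add_block_mx.
  rewrite scale_block_mx /hamiltonian add_block_mx.
  congr block_mx; rewrite /E /F /G;
  rewrite ?(trD, trB, trZ, trN) ?trmx_mul ?trmxK;
  rewrite ?(mulmxDr, mulmxDl, mulmxBl, mulmxBr, mulmxN, mulNmx);
  gen_prods; mx_finish.
exists (A + dlam *: E), (Q - dlam *: F), (D - dlam *: G); split => // hd.
have hl2 : lam + dlam < 0 by rewrite -ltrBrDl sub0r.
have hv' : v = col_mx x (P *m x) by rewrite hv hy.
split.
  exact: (stab_pert sP hPst hAx hv' hlam hl2 hpv (esym hH)).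
move=> Y hY.
have sY := stab_sym sQt sDt hY.
have heigY : hamiltonian (A + dlam *: E) (Q - dlam *: F) (D - dlam *: G) *m col_mx x y
             = (lam + dlam) *: col_mx x y.
  rewrite -hv -hH mulmxDl heig -scalemxAl mulmxBl -!mulmxA hpv hqv mulmx1 !mulmx0 subr0.
  by rewrite scalerDl.
have [hyY hAxY] := stab_eig sQt sDt hY hl2 heigY.
have hH' : hamiltonian A Q D = hamiltonian (A + dlam *: E) (Q - dlam *: F) (D - dlam *: G)
            + (- dlam) *: (v *m p^T - q *m q^T) by rewrite -hH scaleNr addrK.
have hvY : v = col_mx x (Y *m x) by rewrite hv hyY.
have hl3 : lam + dlam + - dlam < 0 by rewrite addrK.
by apply: hPu; exact: (stab_pert sY hY hAxY hvY hl2 hl3 hpv hH').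
Qed.
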